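(* Let $0<q<1/2$, $p=1-q$, $s=4pq$ (so $0<s<1$), and for integers $z\ge1$ let $$P(z)=1-\sum_{k=0}^{z-1}\left(p^zq^k-q^zp^k\right)\binom{k+z-1}{k}.$$ Then as $z\to+\infty$, $$P(z)\sim\frac{s^z}{\sqrt{\pi(1-s)z}}.$$
   Context: $P(z)$ is the probability of success of a double-spend attack by attackers with relative hash power $q$ after $z$ confirmations by the honest miners. The symbol $\sim$ means that the ratio tends to $1$. *)

(* Defs.v *)
From Stdlib Require Import Reals.
From Coquelicot Require Import Coquelicot.
Open Scope R_scope.

(* P(z) = 1 - sum_{k=0}^{z-1} (p^z q^k - q^z p^k) * C(k+z-1, k),  p = 1 - q.
   sum_f_R0 f (z-1) has terms k = 0..z-1 (used for z >= 1 only). *)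
Definition P (q : R) (z : nat) : R :=
  let p := 1 - q in
  1 - sum_f_R0 (fun k => (p ^ z * q ^ k - q ^ z * p ^ k) * Binomial.C (k + z - 1) k) (z - 1).

Definition s_of (q : R) : R := 4 * (1 - q) * q.

(* Main.v *)
Require Import Defs.
From Stdlib Require Import Reals.
From Coquelicot Require Import Coquelicot.
Open Scope R_scope.
From Stdlib Require Import Lra Lia.

Definition Sm (y : R) (m : nat) := sum_f_R0 (fun k => y ^ k * Binomial.C (k + m) k) m.

Lemma C_half m : Binomial.C (2*m+1) (S m) = Binomial.C (2*m+2) (S m) / 2.
Proof.
  assert (H := pascal (2*m+1) m ltac:(lia)).
  assert (H2 := pascal_step1 (2*m+1) m ltac:(lia)).
  replace (2*m+1-m)%nat with (S m) in H2 by lia.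
  replace (S (2*m+1)) with (2*m+2)%nat in H by lia.
  lra.
Qed.

Lemma Sm_rec y m : (1 - y) * Sm y (S m) = Sm y m + y ^ (S m) * (Binomial.C (2*m+1) (S m) - y * Binomial.C (2*m+2) (S m)).
Proof.
  unfold Sm.
  set (F := fun k => y ^ k * Binomial.C (k + S m) k).
  assert (E1 : sum_f_R0 F (S m) = 1 + sum_f_R0 (fun j => y * (y ^ j * Binomial.C (j + S m) j)) m
                                     + sum_f_R0 (fun j => y ^ (S j) * Binomial.C (S j + m) (S j)) m).
  { rewrite decomp_sum by lia. simpl pred.
    unfold F at 1. simpl pow. rewrite C_n_0.
    rewrite Rplus_assoc, <- plus_sum. f_equal. ring.
    apply sum_eq. intros j Hj. unfold F.
    replace (S j + S m)%nat with (S (j + S m)) by lia.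
    rewrite <- (pascal (j + S m) j) by lia.
    replace (S j + m)%nat with (j + S m)%nat by lia. simpl. ring. }
  assert (E2 : sum_f_R0 (fun j => y * (y ^ j * Binomial.C (j + S m) j)) m
               = y * (sum_f_R0 F (S m) - y ^ (S m) * Binomial.C (2*m+2) (S m))).
  { rewrite tech5. unfold F at 2. replace (S m + S m)%nat with (2*m+2)%nat by lia.
    match goal with |- _ = y * (?a + ?b - ?b) => replace (y * (a + b - b)) with (y * a) by ring end.
    rewrite scal_sum. apply sum_eq. intros; unfold F; ring. }
  assert (E3 : sum_f_R0 (fun j => y ^ (S j) * Binomial.C (S j + m) (S j)) m
               = sum_f_R0 (fun k => y ^ k * Binomial.C (k + m) k) m + y ^ (S m) * Binomial.C (2*m+1) (S m) - 1).
  { assert (H := decomp_sum (fun k => y ^ k * Binomial.C (k + m) k) (S m) ltac:(lia)).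
    rewrite tech5 in H. simpl pred in H. cbv beta in H. rewrite pow_O, C_n_0 in H.
    replace (S m + m)%nat with (2*m+1)%nat in H by lia. lra. }
  rewrite E2, E3 in E1. set (X := sum_f_R0 F (S m)) in *. 
  nra.
Qed.

Lemma scal_sum_l (f : nat -> R) c n : sum_f_R0 (fun i => c * f i) n = c * sum_f_R0 f n.
Proof. rewrite scal_sum. apply sum_eq. intros; ring. Qed.

Definition G (x y : R) (m : nat) := sum_f_R0 (fun k => x ^ (S m) * y ^ k * Binomial.C (k + m) k) m.

Lemma G_Sm x y m : G x y m = x ^ (S m) * Sm y m.
Proof. unfold G, Sm. rewrite scal_sum. apply sum_eq. intros; ring. Qed.

Lemma G_rec x y m : x + y = 1 ->
  G x y (S m) = G x y m + (x * y) ^ (S m) * Binomial.C (2 * S m) (S m) * (/2 - y).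
Proof.
  intros Hxy. rewrite !G_Sm.
  replace (x ^ S (S m) * Sm y (S m)) with (x ^ S m * ((1 - y) * Sm y (S m))) by (replace (1-y) with x by lra; simpl; ring).
  rewrite Sm_rec, C_half. replace (2 * S m)%nat with (2*m+2)%nat by lia.
  rewrite Rpow_mult_distr. field.
Qed.

Lemma G0 x y : G x y 0 = x.
Proof. unfold G. simpl. rewrite C_n_0. ring. Qed.

Lemma G_sum x y m : x + y = 1 -> G x y m + G y x m = 1.
Proof.
  intros H. induction m. rewrite !G0. lra.
  rewrite G_rec by lra. rewrite G_rec by lra.
  rewrite (Rmult_comm y x). 
  match goal with |- ?a + ?b * (/2 - y) + (?c + ?b * (/2 - x)) = 1 => 
    replace (a + b * (/2 - y) + (c + b * (/2 - x))) with (a + c + b * (1 - (x + y))) by field end.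
  rewrite H. lra.
Qed.

Lemma C_nonneg n k : 0 <= Binomial.C n k.
Proof.
  unfold Binomial.C. apply Rmult_le_pos. apply pos_INR.
  apply Rlt_le, Rinv_0_lt_compat, Rmult_lt_0_compat; apply INR_fact_lt_0.
Qed.

Lemma G_nonneg x y m : 0 <= x -> 0 <= y -> 0 <= G x y m.
Proof.
  intros. unfold G. apply cond_pos_sum. intros. apply Rmult_le_pos. apply Rmult_le_pos; apply pow_le; lra. apply C_nonneg.
Qed.

Lemma G_half m : G (/2) (/2) m = /2.
Proof. assert (H := G_sum (/2) (/2) m ltac:(lra)). lra. Qed.

Lemma G_bound q m : 0 <= q -> q <= /2 -> G q (1 - q) m <= q * (4 * (1-q) * q) ^ m.
Proof.
  intros H0 H1. unfold G.
  apply Rle_trans with (sum_f_R0 (fun k => (q ^ (S m) * (2 * (1-q)) ^ m * 2 ^ (S m)) * ((/2) ^ (S m) * (/2) ^ k * Binomial.C (k + m) k)) m).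
  - apply sum_Rle. intros k Hk.
    assert (Hc := C_nonneg (k+m) k).
    assert (E : (1-q)^k = (2*(1-q))^k * (/2)^k) by (rewrite <- Rpow_mult_distr; f_equal; field).
    assert (M : (2*(1-q))^k <= (2*(1-q))^m) by (apply Rle_pow; [lra|lia]).
    assert (E2 : 2 ^ (S m) * (/2)^(S m) = 1) by (rewrite <- Rpow_mult_distr; replace (2 * /2) with 1 by field; apply pow1).
    rewrite E.
    assert (0 <= q ^ S m) by (apply pow_le; lra).
    assert (0 <= (/2) ^ k) by (apply pow_le; lra).
    replace (q ^ S m * (2 * (1 - q)) ^ m * 2 ^ S m * ((/ 2) ^ S m * (/ 2) ^ k * Binomial.C (k + m) k))
      with (q ^ S m * (2 * (1 - q)) ^ m * (2 ^ S m * (/ 2) ^ S m) * ((/ 2) ^ k * Binomial.C (k + m) k)) by ring.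
    rewrite E2.
    replace (q ^ S m * ((2 * (1 - q)) ^ k * (/ 2) ^ k) * Binomial.C (k + m) k) with (q ^ S m * ((/ 2) ^ k * Binomial.C (k + m) k) * (2 * (1 - q)) ^ k) by ring.
    replace (q ^ S m * (2 * (1 - q)) ^ m * 1 * ((/ 2) ^ k * Binomial.C (k + m) k)) with (q ^ S m * ((/ 2) ^ k * Binomial.C (k + m) k) * (2 * (1 - q)) ^ m) by ring.
    apply Rmult_le_compat_l. apply Rmult_le_pos; auto. apply Rmult_le_pos; auto. auto.
  - rewrite scal_sum_l. fold (G (/2) (/2) m). rewrite G_half.
    replace (4 * (1-q) * q) with ((2 * (1-q)) * (2 * q)) by ring. rewrite Rpow_mult_distr.
    simpl. rewrite Rpow_mult_distr. rewrite !Rpow_mult_distr. right. field.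
Qed.

Definition Iw (n : nat) := RInt (fun x => sin x ^ n) 0 (PI/2).

Lemma cont_sinpow n (x:R) : continuous (fun x : R => sin x ^ n) x.
Proof. apply (ex_derive_continuous (K:=R_AbsRing) (V:=R_NormedModule)). auto_derive. auto. Qed.

Lemma ex_I n : ex_RInt (fun x => sin x ^ n) 0 (PI/2).
Proof. apply (ex_RInt_continuous (V:=R_CompleteNormedModule)). intros; apply cont_sinpow. Qed.

Lemma Iw0 : Iw 0 = PI/2.
Proof. unfold Iw. simpl. rewrite RInt_const. unfold scal; simpl. unfold mult; simpl. ring. Qed.

Lemma Iw1 : Iw 1 = 1.
Proof.
  unfold Iw.
  apply is_RInt_unique.
  assert (H0 := is_RInt_derive (V:=R_CompleteNormedModule) (fun x => - cos x) (fun x => sin x ^ 1) 0 (PI/2)).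
  replace (minus _ _) with 1 in H0.
  2:{ simpl. rewrite cos_PI2, cos_0. unfold minus, plus, opp; simpl. ring. }
  apply H0.
  - intros. auto_derive. auto. simpl. ring.
  - intros. apply cont_sinpow with (n := 1%nat).
Qed.

Lemma Irec n : INR (n+2) * Iw (n+2) = INR (n+1) * Iw n.
Proof.
  assert (H : is_RInt (fun x => INR (n+2) * sin x ^ (n+2) - INR (n+1) * sin x ^ n) 0 (PI/2) 0).
  { assert (H0 := is_RInt_derive (V:=R_CompleteNormedModule) (fun x => - cos x * sin x ^ (n+1))
       (fun x => INR (n+2) * sin x ^ (n+2) - INR (n+1) * sin x ^ n) 0 (PI/2)).
    replace (minus _ _) with 0 in H0.
    2:{ simpl. rewrite cos_PI2, sin_0. unfold minus, plus, opp; simpl. rewrite pow_i by lia. ring. }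
    apply H0.
    - intros. auto_derive. auto.
      rewrite !plus_INR. simpl.
      replace (n+2)%nat with (S (S n)) by lia. replace (n+1)%nat with (S n) by lia.
      rewrite <- !pred_Sn. simpl.
      match goal with |- @eq _ ?a ?b => change (@eq R a b) end.
      assert (E := sin2_cos2 x); unfold Rsqr in E.
      match goal with |- ?a = ?b => assert (E' : a - b = - (INR n + 1) * sin x ^ n * (sin x * sin x + cos x * cos x - 1)) by ring end.
      rewrite E in E'. lra.
    - intros. apply (ex_derive_continuous (K:=R_AbsRing) (V:=R_NormedModule)). auto_derive. auto. }
  assert (H1 := RInt_correct (V:=R_CompleteNormedModule) _ _ _ (ex_I (n+2))).
  assert (H2 := RInt_correct (V:=R_CompleteNormedModule) _ _ _ (ex_I n)).
  apply (is_RInt_scal _ _ _ (INR (n+2))) in H1.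
  apply (is_RInt_scal _ _ _ (INR (n+1))) in H2.
  assert (H3 := is_RInt_minus _ _ _ _ _ _ H1 H2).
  apply (is_RInt_unique (V:=R_CompleteNormedModule)) in H.
  apply (is_RInt_unique (V:=R_CompleteNormedModule)) in H3.
  change (RInt (fun x => INR (n+2) * sin x ^ (n+2) - INR (n+1) * sin x ^ n) 0 (PI/2) = INR (n+2) * Iw (n+2) - INR (n+1) * Iw n) in H3.
  lra.
Qed.

Lemma Idec n : Iw (S n) <= Iw n.
Proof.
  unfold Iw. apply RInt_le.
  - generalize PI_RGT_0; lra.
  - apply ex_I.
  - apply ex_I.
  - intros x Hx. simpl.
    assert (0 <= sin x <= 1).
    { split. apply sin_ge_0; generalize PI_RGT_0; lra. apply SIN_bound. }
    assert (0 <= sin x ^ n) by (apply pow_le; lra).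
    nra.
Qed.

Fixpoint cc (n : nat) : R := match n with 0%nat => 1 | S m => cc m * (2 * INR m + 1) / (2 * INR m + 2) end.

Lemma cc_pos n : 0 < cc n.
Proof. induction n; simpl. lra. assert (0 <= INR n) by apply pos_INR. apply Rdiv_lt_0_compat; nra. Qed.

Ltac toR := match goal with |- @eq _ ?a ?b => change (@eq R a b) end.

Lemma Irec' k : Iw (k+2) = (INR k + 1) / (INR k + 2) * Iw k.
Proof.
  assert (H := Irec k). assert (0 <= INR k) by apply pos_INR.
  replace (INR (k+2)) with (INR k + 2) in H by (rewrite plus_INR; simpl; ring).
  replace (INR (k+1)) with (INR k + 1) in H by (rewrite plus_INR; simpl; ring).
  apply (Rmult_eq_reg_l (INR k + 2)). 2: lra. rewrite H. field. lra.
Qed.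

Lemma INR2n n : INR (2*n) = 2 * INR n.
Proof. rewrite mult_INR; simpl; ring. Qed.
Lemma INR2n1 n : INR (2*n+1) = 2 * INR n + 1.
Proof. rewrite plus_INR, mult_INR; simpl; ring. Qed.

Lemma I_even n : Iw (2*n) = cc n * (PI/2).
Proof.
  induction n. simpl. rewrite Iw0. ring.
  replace (2 * S n)%nat with (2*n+2)%nat by lia.
  rewrite Irec', IHn, INR2n. simpl cc. toR. field.
  assert (0 <= INR n) by apply pos_INR. lra.
Qed.

Lemma I_odd n : Iw (2*n+1) * (2 * INR n + 1) * cc n = 1.
Proof.
  induction n. simpl. rewrite Iw1. ring.
  replace (2 * S n + 1)%nat with (2*n+1+2)%nat by lia.
  rewrite Irec', INR2n1. simpl cc. rewrite S_INR. transitivity (Iw (2*n+1) * (2*INR n+1) * cc n). 2: exact IHn. toR.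
  field. assert (0 <= INR n) by apply pos_INR. lra.
Qed.

Lemma wallis_bounds n : 2 * INR n / (2 * INR n + 1) <= cc n ^ 2 * PI * INR n <= 1.
Proof.
  assert (Hn : 0 <= INR n) by apply pos_INR.
  assert (Hc := cc_pos n). assert (Hpi := PI_RGT_0).
  assert (E1 := I_even n). assert (E2 := I_even (S n)). assert (O := I_odd n).
  assert (D1 := Idec (2*n)). assert (D2 := Idec (2*n+1)).
  replace (S (2*n)) with (2*n+1)%nat in D1 by lia.
  replace (S (2*n+1)) with (2*S n)%nat in D2 by lia.
  simpl cc in E2.
  set (J := Iw (2*n+1)) in *.
  rewrite E1 in D1. rewrite E2 in D2.
  set (x := INR n) in *. set (a := cc n) in *.
  assert (O' : J = / ((2*x+1)*a)). { apply (Rmult_eq_reg_l ((2*x+1)*a)). 2: nra. rewrite Rinv_r by nra. transitivity (J*(2*x+1)*a). ring. exact O. }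
  assert (Hy : 0 < a * a * PI) by (apply Rmult_lt_0_compat; nra).
  assert (K1 : 2 <= (2*x+1) * (a*a*PI)).
  { assert (H := Rmult_le_compat_l ((2*x+1)*a) _ _ (ltac:(nra)) D1).
    replace ((2*x+1)*a*J) with 1 in H by (rewrite O'; field; nra). nra. }
  assert (K2 : (a*a*PI) * (2*x+1)^2 <= 4*(x+1)).
  { assert (H := Rmult_le_compat_l ((2*x+1)*a*(2*x+2)) _ _ (ltac:(nra)) D2).
    replace ((2*x+1)*a*(2*x+2)*J) with (2*x+2) in H by (rewrite O'; field; nra).
    replace ((2 * x + 1) * a * (2 * x + 2) * (a * (2 * x + 1) / (2 * x + 2) * (PI / 2))) with ((a*a*PI)*(2*x+1)^2/2) in H by (field; lra).
    lra. }
  replace (a^2*PI*x) with ((a*a*PI)*x) by ring.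
  split.
  - apply (Rmult_le_reg_r (2*x+1)). lra.
    replace (2 * x / (2 * x + 1) * (2 * x + 1)) with (2*x) by (field; lra). nra.
  - nra.
Qed.

Lemma C_cc n : Binomial.C (2*n) n = cc n * 4 ^ n.
Proof.
  induction n. simpl. rewrite C_n_0. ring.
  replace (2 * S n)%nat with (S (S (2*n)))%nat by lia.
  rewrite pascal_step3 by lia.
  rewrite pascal_step2 by lia.
  rewrite pascal_step2 by lia.
  rewrite IHn.
  replace (S (S (2*n)) - S n)%nat with (S n) by lia.
  replace (S (2*n) - n)%nat with (S n) by lia.
  replace (S (S (2*n)) - n)%nat with (S (S n)) by lia.
  simpl cc. rewrite !S_INR, mult_INR. simpl INR.
  assert (0 <= INR n) by apply pos_INR.
  simpl pow. field. lra.
Qed.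

Lemma P_G q m : P q (S m) = 1 - G (1-q) q m + G q (1-q) m.
Proof.
  unfold P. cbv zeta. replace (S m - 1)%nat with m by lia.
  unfold G. rewrite <- (Rminus_0_r 1) at 2.
  assert (E : forall a b, 1 - a = 1 - b -> True) by auto.
  match goal with |- 1 - ?a = _ => assert (H : a = sum_f_R0 (fun k => (1 - q) ^ S m * q ^ k * Binomial.C (k + m) k) m - sum_f_R0 (fun k => q ^ S m * (1 - q) ^ k * Binomial.C (k + m) k) m) end.
  { rewrite <- minus_sum. apply sum_eq. intros. replace (i + S m - 1)%nat with (i + m)%nat by lia. ring. }
  rewrite H. ring.
Qed.

Lemma lim_mono (u : nat -> R) m0 : (forall m, (m0 <= m)%nat -> u m <= u (S m)) -> is_lim_seq u 0 -> u m0 <= 0.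
Proof.
  intros H L.
  assert (K : forall k, u m0 <= u (k + m0)%nat).
  { induction k. simpl; lra. apply Rle_trans with (u (k+m0)%nat). auto. apply H. lia. }
  apply (is_lim_seq_incr_n _ m0) in L.
  assert (R := is_lim_seq_le (fun _ => u m0) _ _ _ K (is_lim_seq_const _) L).
  simpl in R. exact R.
Qed.

Definition rr (n : nat) := (2 * INR n + 1) / (2 * INR n + 2).

Lemma cc_S n : cc (S n) = cc n * rr n.
Proof. simpl. unfold rr. field. assert (0 <= INR n) by apply pos_INR. lra. Qed.

Lemma rr_bounds n : 0 < rr n < 1.
Proof. unfold rr. assert (0 <= INR n) by apply pos_INR. split.
  apply Rdiv_lt_0_compat; lra. apply (Rmult_lt_reg_r (2 * INR n + 2)). lra.
  unfold Rdiv. rewrite Rmult_assoc, Rinv_l by lra. lra. Qed.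

Lemma rr_mono a b : (a <= b)%nat -> rr a <= rr b.
Proof.
  intros H. apply le_INR in H. unfold rr. assert (0 <= INR a) by apply pos_INR.
  unfold Rdiv. apply (Rmult_le_reg_r ((2 * INR a + 2) * (2 * INR b + 2))). nra.
  replace ((2 * INR a + 1) * / (2 * INR a + 2) * ((2 * INR a + 2) * (2 * INR b + 2))) with ((2 * INR a + 1) * (2 * INR b + 2)) by (field; lra).
  replace ((2 * INR b + 1) * / (2 * INR b + 2) * ((2 * INR a + 2) * (2 * INR b + 2))) with ((2 * INR b + 1) * (2 * INR a + 2)) by (field; lra).
  nra.
Qed.

Lemma cc_le1 n : cc n <= 1.
Proof. induction n. simpl; lra. rewrite cc_S. assert (H := rr_bounds n). assert (H2 := cc_pos n). nra. Qed.


Lemma s_bounds (q : R) (hq0 : 0 < q) (hq1 : q < 1/2) : 0 < (s_of q) < 1.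
Proof.
  set (s := s_of q) in *. unfold s, s_of. split. nra. nra. Qed.

Lemma one_s (q : R) (hq0 : 0 < q) (hq1 : q < 1/2) : 1 - (s_of q) = (1 - 2*q)^2.
Proof.
  set (s := s_of q) in *. unfold s, s_of. ring. Qed.

Lemma Q_diff (q : R) (hq0 : 0 < q) (hq1 : q < 1/2) m : P q (S m) - P q (S (S m)) = (1 - 2*q) * cc (S m) * (s_of q) ^ (S m).
Proof.
  set (s := s_of q) in *.
  rewrite !P_G. rewrite (G_rec (1-q) q) by lra. rewrite (G_rec q (1-q)) by lra.
  rewrite C_cc. unfold s, s_of.
  replace (4 * (1-q) * q) with (4 * ((1-q)*q)) by ring. rewrite (Rpow_mult_distr 4).
  replace (q * (1-q)) with ((1-q)*q) by ring. ring.
Qed.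

Lemma Q_eq (q : R) (hq0 : 0 < q) (hq1 : q < 1/2) m : P q (S m) = 2 * G q (1-q) m.
Proof.
  set (s := s_of q) in *. rewrite P_G. assert (H := G_sum (1-q) q m ltac:(lra)). lra. Qed.

Lemma Q_lim (q : R) (hq0 : 0 < q) (hq1 : q < 1/2) : is_lim_seq (fun m => P q (S m)) 0.
Proof.
  set (s := s_of q) in *.
  apply is_lim_seq_le_le with (u := fun _ => 0) (w := fun m => (2*q) * s ^ m).
  - intros n. rewrite (Q_eq q hq0 hq1). split.
    + assert (H := G_nonneg q (1-q) n ltac:(lra) ltac:(lra)). lra.
    + assert (H := G_bound q n ltac:(lra) ltac:(lra)). fold (s_of q) in H. fold s in H. lra.
  - apply is_lim_seq_const.
  - replace (Finite 0) with (Rbar_mult (2*q) 0) by (simpl; f_equal; ring).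
    apply is_lim_seq_scal_l. apply is_lim_seq_geom. rewrite Rabs_pos_eq; generalize (s_bounds q hq0 hq1 : 0 < s < 1); lra.
Qed.

Lemma ccs_lim (q : R) (hq0 : 0 < q) (hq1 : q < 1/2) : is_lim_seq (fun m => cc (S m) * (s_of q) ^ (S m)) 0.
Proof.
  set (s := s_of q) in *.
  apply is_lim_seq_le_le with (u := fun _ => 0) (w := fun m => s ^ (S m)).
  - intros n. assert (H1 := cc_pos (S n)). assert (H2 := cc_le1 (S n)).
    assert (H3 : 0 <= s ^ S n) by (apply pow_le; generalize (s_bounds q hq0 hq1 : 0 < s < 1); lra). split; nra.
  - apply is_lim_seq_const.
  - apply (is_lim_seq_incr_1 (fun m => s ^ m)). apply is_lim_seq_geom. rewrite Rabs_pos_eq; generalize (s_bounds q hq0 hq1 : 0 < s < 1); lra.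
Qed.

Lemma upper (q : R) (hq0 : 0 < q) (hq1 : q < 1/2) m : P q (S m) <= (1 - 2*q) * cc (S m) * (s_of q) ^ (S m) / (1 - (s_of q)).
Proof.
  set (s := s_of q) in *.
  assert (Hs := (s_bounds q hq0 hq1 : 0 < s < 1)).
  set (u := fun k => P q (S k) - (1 - 2*q) * cc (S k) * s ^ (S k) / (1 - s)).
  assert (H : u m <= 0).
  { apply lim_mono.
    - intros k _. unfold u. assert (D := (Q_diff q hq0 hq1) k). fold s in D.
      rewrite (cc_S (S k)).
      assert (R := rr_bounds (S k)). assert (C := cc_pos (S k)).
      assert (T : 0 < s ^ S k) by (apply pow_lt; lra).
      change (s ^ S (S k)) with (s * s ^ S k).
      set (a := cc (S k)) in *. set (t := s ^ S k) in *. set (r := rr (S k)) in *.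
      assert (E : P q (S (S k)) - (1 - 2 * q) * (a * r) * (s * t) / (1 - s) - (P q (S k) - (1 - 2 * q) * a * t / (1 - s))
                = (1 - 2*q) * s * t * (a * (1 - r)) / (1 - s)).
      { replace (P q (S (S k))) with (P q (S k) - (1-2*q)*a*t) by lra. field. lra. }
      assert (0 <= (1 - 2*q) * s * t * (a * (1 - r)) / (1 - s)).
      { assert (0 <= (1-2*q)*s) by nra. assert (0 <= (1-2*q)*s*t) by nra. assert (0 <= a*(1-r)) by nra.
        apply Rmult_le_pos. nra. apply Rlt_le, Rinv_0_lt_compat; lra. }
      lra.
    - unfold u. replace 0 with (0 - (1 - 2*q) / (1 - s) * 0) by ring.
      apply is_lim_seq_minus'. apply (Q_lim q hq0 hq1).
      apply (is_lim_seq_ext (fun k => (1 - 2*q) / (1 - s) * (cc (S k) * s ^ S k))).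
      intros; field; lra.
      replace ((1 - 2*q) / (1 - s) * 0) with ((1 - 2*q) / (1 - s) * 0) by ring.
      apply (is_lim_seq_scal_l _ ((1 - 2*q) / (1 - s)) 0). apply (ccs_lim q hq0 hq1). }
  unfold u in H. lra.
Qed.
Lemma lower (q : R) (hq0 : 0 < q) (hq1 : q < 1/2) m : (1 - 2*q) * cc (S m) * (s_of q) ^ (S m) / (1 - rr (S m) * (s_of q)) <= P q (S m).
Proof.
  set (s := s_of q) in *.
  assert (Hs := (s_bounds q hq0 hq1 : 0 < s < 1)). assert (Rm := rr_bounds (S m)).
  set (rho := rr (S m)) in *.
  assert (Hg : 0 < 1 - rho * s) by nra.
  set (u := fun k => (1 - 2*q) * cc (S k) * s ^ (S k) / (1 - rho * s) - P q (S k)).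
  assert (H : u m <= 0).
  { apply lim_mono.
    - intros k Hk. unfold u. assert (D := (Q_diff q hq0 hq1) k). fold s in D.
      rewrite (cc_S (S k)).
      assert (R := rr_bounds (S k)). assert (C := cc_pos (S k)).
      assert (Mo : rho <= rr (S k)) by (apply rr_mono; lia).
      assert (T : 0 < s ^ S k) by (apply pow_lt; lra).
      change (s ^ S (S k)) with (s * s ^ S k).
      set (a := cc (S k)) in *. set (t := s ^ S k) in *. set (r := rr (S k)) in *.
      assert (E : (1 - 2 * q) * (a * r) * (s * t) / (1 - rho * s) - P q (S (S k)) - ((1 - 2 * q) * a * t / (1 - rho * s) - P q (S k))
                = (1 - 2*q) * a * t * (s * (r - rho)) / (1 - rho * s)).
      { replace (P q (S (S k))) with (P q (S k) - (1-2*q)*a*t) by lra. field. lra. }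
      assert (0 <= (1 - 2*q) * a * t * (s * (r - rho)) / (1 - rho * s)).
      { assert (0 <= (1-2*q)*a) by nra. assert (0 <= (1-2*q)*a*t) by nra. assert (0 <= s*(r-rho)) by nra.
        apply Rmult_le_pos. nra. apply Rlt_le, Rinv_0_lt_compat; lra. }
      lra.
    - unfold u. replace 0 with ((1 - 2*q) / (1 - rho * s) * 0 - 0) by ring.
      apply is_lim_seq_minus'. 2: apply (Q_lim q hq0 hq1).
      apply (is_lim_seq_ext (fun k => (1 - 2*q) / (1 - rho * s) * (cc (S k) * s ^ S k))).
      intros; field; lra.
      apply (is_lim_seq_scal_l _ ((1 - 2*q) / (1 - rho * s)) 0). apply (ccs_lim q hq0 hq1). }
  unfold u in H. lra.
Qed.


Lemma inv_lim : is_lim_seq (fun m => / INR (S m)) 0.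
Proof.
  assert (H := is_lim_seq_INR). apply is_lim_seq_incr_1 in H.
  apply (is_lim_seq_inv _ _ H). discriminate.
Qed.

Lemma AB_bound x s : 1 <= x -> 0 < s < 1 ->
  1 - (1 + s / (1 - s)) * / x <= 2 * x / (2 * x + 1) * ((1 - s) / (1 - (2 * x + 1) / (2 * x + 2) * s)).
Proof.
  intros Hx Hs.
  set (D := (2*x+2) - (2*x+1)*s).
  assert (HD : x * (1 - s) <= D) by (unfold D; nra).
  assert (HD0 : 0 < x * (1-s)) by nra.
  replace ((1 - s) / (1 - (2 * x + 1) / (2 * x + 2) * s)) with (1 - s / D) by (unfold D; field; split; nra).
  replace (2 * x / (2 * x + 1)) with (1 - / (2*x+1)) by (field; lra).
  assert (A1 : / (2*x+1) <= / x) by (apply Rinv_le_contravar; lra).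
  assert (A2 : s / D <= s / (x * (1-s))).
  { unfold Rdiv. apply Rmult_le_compat_l. lra. apply Rinv_le_contravar; lra. }
  assert (A3 : 0 <= / (2*x+1)) by (apply Rlt_le, Rinv_0_lt_compat; lra).
  assert (A4 : 0 <= s / D) by (apply Rlt_le, Rdiv_lt_0_compat; lra).
  assert (A5 : / (2*x+1) <= 1) by (rewrite <- Rinv_1; apply Rinv_le_contravar; lra).
  assert (A6 : s / D <= 1) by (apply (Rmult_le_reg_r D); [lra|]; unfold Rdiv; rewrite Rmult_assoc, Rinv_l by lra; unfold D; nra).
  assert (E : (1 + s / (1 - s)) * / x = / x + s / (x * (1 - s))) by (field; lra).
  rewrite E. set (a := / (2*x+1)) in *. set (b := s / D) in *.
  assert (0 <= a * b) by (apply Rmult_le_pos; lra).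
  assert (E2 : (1-a)*(1-b) = 1 - a - b + a*b) by ring. lra.
Qed.

Theorem mainTheorem4 (q : R) (hq0 : 0 < q) (hq1 : q < 1 / 2) :
  is_lim_seq
    (fun z : nat =>
       P q z / (s_of q ^ z / sqrt (PI * (1 - s_of q) * INR z)))
    1.
Proof.
  apply is_lim_seq_incr_1.
  assert (Hs := s_bounds q hq0 hq1). assert (E1s := one_s q hq0 hq1).
  set (s := s_of q) in *.
  set (K := 1 + s / (1 - s)).
  apply is_lim_seq_le_le with (u := fun m => 1 - K * / INR (S m)) (w := fun _ => 1).
  2:{ replace (Finite 1) with (Finite (1 - K * 0)) by (f_equal; ring).
      apply is_lim_seq_minus'. apply is_lim_seq_const.
      apply (is_lim_seq_scal_l _ K 0). apply inv_lim. }
  2: apply is_lim_seq_const.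
  intros m.
  assert (Up := upper q hq0 hq1 m). assert (Lo := lower q hq0 hq1 m).
  fold s in Up, Lo.
  assert (W := wallis_bounds (S m)).
  assert (Hx : 1 <= INR (S m)) by (rewrite S_INR; generalize (pos_INR m); lra).
  assert (Hrr : rr (S m) = (2 * INR (S m) + 1) / (2 * INR (S m) + 2)) by reflexivity.
  rewrite Hrr in Lo.
  assert (AB := AB_bound (INR (S m)) s Hx Hs). fold K in AB.
  set (x := INR (S m)) in *.
  assert (Hc := cc_pos (S m)).
  set (a := cc (S m)) in *.
  assert (Ht : 0 < s ^ S m) by (apply pow_lt; lra).
  set (t := s ^ S m) in *.
  assert (Hpi := PI_RGT_0).
  assert (HR2 : 0 < PI * (1 - s) * x) by (apply Rmult_lt_0_compat; [apply Rmult_lt_0_compat|]; lra).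
  assert (HR : 0 < sqrt (PI * (1 - s) * x)) by (apply sqrt_lt_R0; lra).
  assert (HRsq : sqrt (PI * (1 - s) * x) ^ 2 = PI * (1 - s) * x) by (apply pow2_sqrt; lra).
  set (R := sqrt (PI * (1 - s) * x)) in *.
  set (Q := P q (S m)) in *.
  replace (Q / (t / R)) with (Q * R / t) by (field; lra).
  set (T := (1 - 2*q) * a * R / (1 - s)).
  assert (HT0 : 0 <= T).
  { unfold T. apply Rmult_le_pos. assert (0 <= 1 - 2*q) by lra. apply Rmult_le_pos; [nra|lra]. apply Rlt_le, Rinv_0_lt_compat; lra. }
  assert (HT2 : T ^ 2 = a ^ 2 * PI * x).
  { unfold T. replace (((1 - 2 * q) * a * R / (1 - s)) ^ 2) with ((1 - 2*q)^2 * a^2 * R^2 / (1-s)^2) by (field; lra).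
    rewrite HRsq, <- E1s. field. lra. }
  assert (HT1 : T <= 1) by nra.
  assert (HTA : 2 * x / (2 * x + 1) <= T) by nra.
  set (rho := (2 * x + 1) / (2 * x + 2)) in *.
  assert (Hrho : 0 < 1 - rho * s).
  { assert (0 < rho < 1). { unfold rho. split. apply Rdiv_lt_0_compat; lra.
      apply (Rmult_lt_reg_r (2*x+2)). lra. unfold Rdiv. rewrite Rmult_assoc, Rinv_l by lra. lra. }
    nra. }
  split.
  -
    apply Rle_trans with (2 * x / (2 * x + 1) * ((1 - s) / (1 - rho * s))). exact AB.
    apply Rle_trans with (T * ((1 - s) / (1 - rho * s))).
    { apply Rmult_le_compat_r. apply Rlt_le, Rdiv_lt_0_compat; lra. exact HTA. }
    replace (T * ((1 - s) / (1 - rho * s))) with ((1 - 2 * q) * a * t / (1 - rho * s) * R / t) by (unfold T; field; split; lra).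
    unfold Rdiv. apply Rmult_le_compat_r. apply Rlt_le, Rinv_0_lt_compat; lra.
    apply Rmult_le_compat_r. lra. exact Lo.
  -
    apply Rle_trans with T. 2: exact HT1.
    replace T with ((1 - 2 * q) * a * t / (1 - s) * R / t) by (unfold T; field; split; lra).
    unfold Rdiv. apply Rmult_le_compat_r. apply Rlt_le, Rinv_0_lt_compat; lra.
    apply Rmult_le_compat_r. lra. exact Up.
Qed.
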